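(* Let $\Gamma$ be a finitely generated group, and let $\{G_n\}$ be a collection of finite groups together with epimorphisms $\phi_n:\Gamma\to G_n$ such that $\bigcap_n \ker\phi_n=1$ (i.e. for every nontrivial $\gamma\in\Gamma$ there is some $n$ with $\phi_n(\gamma)\neq 1$). Assume further that $\Phi(G_n)=1$ for every $n$. Then $\Phi(\Gamma)=\Phi_f(\Gamma)=1$.
   Context: For a group $G$, a maximal subgroup is a proper subgroup maximal with respect to inclusion among proper subgroups. The Frattini subgroup $\Phi(G)$ is the intersection of all maximal subgroups of $G$ if such exist, and $\Phi(G)=G$ otherwise. $\Phi_f(G)$ is the intersection of all maximal subgroups of finite index in $G$ (taken to be $G$ if there are none). *)

(* Defs.v *)
From mathcomp Require Import all_boot all_fingroup all_solvable.
Set Implicit Arguments. Unset Strict Implicit. Unset Printing Implicit Defensive.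

Record is_group (T : Type) (mul : T -> T -> T) (inv : T -> T) (one : T) : Prop := {
  grp_assoc : forall x y z, mul x (mul y z) = mul (mul x y) z;
  grp_id_l : forall x, mul one x = x;
  grp_inv_l : forall x, mul (inv x) x = one }.

Section AbstractGroup.
Variables (T : Type) (mul : T -> T -> T) (inv : T -> T) (one : T).

Definition is_subgroup (H : T -> Prop) : Prop :=
  H one /\ (forall x y, H x -> H y -> H (mul x y)) /\ (forall x, H x -> H (inv x)).

Definition is_maximal_subgroup (H : T -> Prop) : Prop :=
  is_subgroup H /\ (exists x, ~ H x) /\
  (forall K, is_subgroup K -> (forall x, H x -> K x) ->
     (exists x, ~ K x) -> forall x, K x -> H x).

(* H has finite index: finitely many left cosets g H cover the group *)
Definition finite_index (H : T -> Prop) : Prop :=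
  exists (k : nat) (r : 'I_k -> T), forall g, exists i, H (mul (inv (r i)) g).

(* Frattini subgroup: intersection of all maximal subgroups
   (the whole group if there are none — an empty intersection). *)
Definition frattini (x : T) : Prop :=
  forall M, is_maximal_subgroup M -> M x.

Definition frattini_f (x : T) : Prop :=
  forall M, is_maximal_subgroup M -> finite_index M -> M x.

Definition finitely_generated : Prop :=
  exists (k : nat) (S : 'I_k -> T), forall H, is_subgroup H ->
    (forall i, H (S i)) -> forall x, H x.

End AbstractGroup.

(* Main.v *)
Require Import Defs.
From Stdlib Require Import Classical ClassicalEpsilon.
From mathcomp Require Import all_boot all_fingroup all_solvable.

Theorem proposition2p1
  (T : Type) (mul : T -> T -> T) (inv : T -> T) (one : T)
  (Hgrp : is_group mul inv one)
  (Hfg : finitely_generated mul inv one)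
  (I : Type) (gT : I -> finGroupType) (G : forall n, {group gT n})
  (phi : forall n, T -> gT n)
  (phi_morph : forall n x y, phi n (mul x y) = (phi n x * phi n y)%g)
  (phi_in : forall n x, phi n x \in G n)
  (phi_onto : forall n y, y \in G n -> exists x, phi n x = y)
  (Hsep : forall x, x <> one -> exists n, phi n x <> 1%g)
  (HPhi : forall n, 'Phi(G n)%g = 1%g) :
  (forall x, frattini mul inv one x <-> x = one) /\
  (forall x, frattini_f mul inv one x <-> x = one).
Proof.
case: Hgrp => assoc idl invl.
have invr : forall x, mul x (inv x) = one.
  move=> x; rewrite -[mul x (inv x)]idl -{1}(invl (inv x)).
  by rewrite -assoc (assoc (inv x)) invl idl invl.
have idr : forall x, mul x one = x.
  by move=> x; rewrite -(invl x) assoc invr idl.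
have phi1 : forall n, phi n one = 1%g.
  move=> n; apply: (mulgI (phi n one)); by rewrite -phi_morph idl mulg1.
have phiV : forall n x, phi n (inv x) = ((phi n x)^-1)%g.
  move=> n x; apply: (mulIg (phi n x)); by rewrite -phi_morph invl phi1 mulVg.
have key : forall x, frattini_f mul inv one x -> x = one.
  move=> x Fx; apply: NNPP => xn1; case: (Hsep x xn1) => n Hn.
  have [M [maxM Mx]] : exists M : {group gT n}, maximal M (G n) /\ phi n x \notin M.
    apply: NNPP => hne; apply: Hn; apply/set1gP; rewrite -(HPhi n).
    apply/bigcapP => H; case/orP => [/eqP -> | mH]; first exact: phi_in.
    apply: NNPP => nH; apply: hne; exists H; split => //; exact/negP.
  have [propM maxM'] := maxgroupP maxM.
  pose Mp := fun t => phi n t \in M.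
  have subMp : is_subgroup mul inv one Mp.
    rewrite /Mp; split; first by rewrite phi1 group1.
    split; first by move=> a b Ha Hb; rewrite phi_morph groupM.
    by move=> a Ha; rewrite phiV groupV.
  suff : Mp x by rewrite /Mp (negbTE Mx).
  apply: (Fx Mp).
  - split => //; split; first by exists x; rewrite /Mp; apply/negP.
    move=> K subK MK [y Ky] t Kt.
    have [K1 [KM KV]] := subK.
    pose b := fun P : Prop => if excluded_middle_informative P then true else false.
    have bP : forall P : Prop, b P = true <-> P.
      by move=> P; rewrite /b; case: excluded_middle_informative.
    pose S := [set z | b (exists k, K k /\ phi n k = z)].
    have inS : forall z, (z \in S) = b (exists k, K k /\ phi n k = z).
      by move=> z; rewrite inE.
    have gS : group_set S.
      apply/group_setP; split.
        by rewrite inS; apply/bP; exists one; split => //; rewrite phi1.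
      move=> a c; rewrite !inS => /bP [k1 [Kk1 <-]] /bP [k2 [Kk2 <-]].
      by apply/bP; exists (mul k1 k2); split; [apply: KM | rewrite phi_morph].
    pose SG := Group gS.
    have MS : M \subset SG.
      apply/subsetP => z zM; rewrite /= inS; apply/bP.
      have [w wz] := phi_onto n z (subsetP (proper_sub propM) z zM).
      by exists w; split => //; apply: MK; rewrite /Mp wz.
    have SGG : SG \subset G n.
      apply/subsetP => z; rewrite /= inS => /bP [k [_ <-]]; exact: phi_in.
    case: (boolP (SG \proper G n)) => pSG.
      have eq := maxM' SG pSG MS.
      rewrite /Mp -eq /= inS; apply/bP; by exists t.
    exfalso; apply: Ky.
    have eqG : (SG :==: G n) by rewrite eqEproper SGG pSG.
    have : phi n y \in SG by rewrite (eqP eqG) phi_in.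
    rewrite /= inS => /bP [k [Kk phik]].
    have Kyk : K (mul y (inv k)).
      by apply: MK; rewrite /Mp phi_morph phiV phik mulgV group1.
    have E : y = mul (mul y (inv k)) k by rewrite -assoc invl idr.
    rewrite E.
    by apply: KM.
  - exists #|G n|.
    pose r := fun i : 'I_#|G n| =>
      proj1_sig (constructive_indefinite_description _ (phi_onto n _ (enum_valP i))).
    exists r => g.
    exists (enum_rank_in (phi_in n g) (phi n g)).
    rewrite /Mp phi_morph phiV /r.
    case: constructive_indefinite_description => w /= ->.
    by rewrite enum_rankK_in ?phi_in // mulVg group1.
have triv : forall x, x = one -> forall M, is_maximal_subgroup mul inv one M -> M x.
  by move=> x -> M [[]].
split=> x; split.
- move=> Fx; apply: key => M mM _; exact: Fx.
- by move/triv => h M mM; apply: h.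
- exact: key.
- by move/triv => h M mM _; apply: h.
Qed.
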